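(* Let $\Delta$ be a finite, flag, simply connected simplicial complex and $\mathcal{P}_H$ as in the context. Let $e\cdot f\cdot g$ be a combinatorial 1-cycle in $\Delta$. Then for every $n\in\mathbb{Z}$, $\mathrm{Area}_{\mathcal{P}_H}(e^nf^ng^n)\le 3|n|^2$.
   Context: $\mathrm{Edge}(\Delta)$ is the set of directed edges of $\Delta$; for $e$ in it, $\iota e$, $\tau e$ are its initial and terminal vertices and $\overline{e}$ is the reversed edge. $e\cdot f\cdot g$ is a combinatorial 1-cycle if $\tau e=\iota f$, $\tau f=\iota g$, $\tau g=\iota e$. $\mathcal{P}_H=\langle\mathrm{Edge}(\Delta)\mid\mathcal{R}_H\rangle$ where $\mathcal{R}_H$ consists of the words $e\overline{e}$ ($e\in\mathrm{Edge}(\Delta)$) and $efg$, $e^{-1}f^{-1}g^{-1}$ for every combinatorial 1-cycle $e\cdot f\cdot g$. For a word $w$ representing the identity, $\mathrm{Area}_{\mathcal{P}_H}(w)$ is the least $m$ such that $w$ is freely equal to $\prod_{i=1}^m x_ir_ix_i^{-1}$ with $r_i\in\mathcal{R}_H^{\pm1}$. For a letter $e$ and $m\in\mathbb{Z}$, $e^m$ is the word of $m$ copies of $e$ if $m\ge0$ and $|m|$ copies of $e^{-1}$ if $m<0$. *)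

(* Defs.v *)
From HB Require Import structures.
From mathcomp Require Import all_boot all_order all_algebra.
Set Implicit Arguments. Unset Strict Implicit. Unset Printing Implicit Defensive.

(* A finite flag simplicial complex Delta is determined by its 1-skeleton:
   a finite simple graph (vertex set a finType T, symmetric irreflexive
   adjacency); the simplices are the cliques. *)
Record sgraph (T : finType) := SGraph {
  adj : rel T;
  adj_sym : symmetric adj;
  adj_irrefl : irreflexive adj }.

Section Defs.
Variables (T : finType) (G : sgraph T).

Definition Edge := {p : T * T | adj G p.1 p.2}.
Definition init_v (e : Edge) : T := (val e).1.
Definition term_v (e : Edge) : T := (val e).2.

Lemma rev_edge_proof (e : Edge) : adj G (val e).2 (val e).1.
Proof. by case: e => [[u v]] /=; rewrite adj_sym. Qed.

Definition rev_edge (e : Edge) : Edge :=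
  exist _ ((val e).2, (val e).1) (rev_edge_proof e).

Definition comb_cycle (e f g : Edge) : Prop :=
  [/\ term_v e = init_v f, term_v f = init_v g & term_v g = init_v e].

(* Words in the free group on Edge(Delta): a letter (x, b) is x if b = false
   and x^{-1} if b = true. *)
Definition letter := (Edge * bool)%type.
Definition word := seq letter.
Definition inv_letter (x : letter) : letter := (x.1, ~~ x.2).
Definition inv_word (w : word) : word := rev (map inv_letter w).

Inductive free_eq : word -> word -> Prop :=
| fe_refl w : free_eq w w
| fe_sym u v : free_eq u v -> free_eq v u
| fe_trans u v w : free_eq u v -> free_eq v w -> free_eq u w
| fe_step u v x : free_eq (u ++ x :: inv_letter x :: v) (u ++ v).

Inductive relator : word -> Prop :=
| rel_rev e : relator [:: (e, false); (rev_edge e, false)]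
| rel_tri e f g : comb_cycle e f g ->
    relator [:: (e, false); (f, false); (g, false)]
| rel_tri_inv e f g : comb_cycle e f g ->
    relator [:: (e, true); (f, true); (g, true)].

Definition relator_pm (r : word) : Prop := relator r \/ relator (inv_word r).

Definition conj_prod (l : seq (word * word)) : word :=
  flatten [seq (p.1 ++ p.2 ++ inv_word p.1) | p <- l].

(* Area_{P_H}(w) <= m : w is freely equal to a product of at most m
   conjugates of elements of R_H^{+-1} (Area is the least such number). *)
Definition area_le (w : word) (m : nat) : Prop :=
  exists l : seq (word * word),
    [/\ forall p, p \in l -> relator_pm p.2,
        size l <= m &
        free_eq w (conj_prod l)].

Definition epow (e : Edge) (m : int) : word :=
  match m with
  | Posz k => nseq k (e, false)
  | Negz k => nseq k.+1 (e, true)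
  end.

(* Simple connectivity of the (flag) complex via the edge-path group:
   elementary moves on edge paths are backtracking x y x <-> x and
   triangle moves x y z <-> x z across a 2-simplex {x,y,z}. *)
Inductive hstep : seq T -> seq T -> Prop :=
| hs_back a b x y : adj G x y ->
    hstep (a ++ [:: x; y; x] ++ b) (a ++ x :: b)
| hs_tri a b x y z : adj G x y -> adj G y z -> adj G x z ->
    hstep (a ++ [:: x; y; z] ++ b) (a ++ [:: x; z] ++ b).

Inductive hequiv : seq T -> seq T -> Prop :=
| he_refl p : hequiv p p
| he_sym p q : hequiv p q -> hequiv q p
| he_trans p q r : hequiv p q -> hequiv q r -> hequiv p r
| he_step p q : hstep p q -> hequiv p q.

Definition simply_connected : Prop :=
  (forall u v : T, exists p : seq T, path (adj G) u p /\ last u p = v) /\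
  (forall (v : T) (p : seq T), path (adj G) v p -> last v p = v ->
     hequiv (v :: p) [:: v]).

End Defs.

(* Main.v *)
Require Import Defs.
From mathcomp Require Import all_boot all_order all_algebra.
From mathcomp Require Import zify.

Section Aux.
Variables (T : finType) (G : sgraph T).
Implicit Types (w u v a b p q : word G).

Lemma fe_cat_l p u v : free_eq u v -> free_eq (p ++ u) (p ++ v).
Proof.
elim=> {u v} [w|u v _ IH|u v w _ IH1 _ IH2|u v x].
- exact: fe_refl.
- exact: fe_sym.
- exact: fe_trans IH1 IH2.
- rewrite !catA; exact: fe_step.
Qed.

Lemma inv_letterK (x : letter G) : inv_letter (inv_letter x) = x.
Proof. by case: x => ? []. Qed.

Lemma inv_cancel a b : free_eq (inv_word a ++ a ++ b) b.
Proof.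
elim: a => [|x a IH] /=; first exact: fe_refl.
rewrite /inv_word /= rev_cons -/(inv_word a) cat_rcons.
apply: fe_trans IH.
have := fe_step (inv_word a) (a ++ b) (inv_letter x).
by rewrite inv_letterK.
Qed.

Lemma area_free w w' m : free_eq w w' -> area_le w m -> area_le w' m.
Proof.
move=> H [l [H1 H2 H3]]; exists l; split => //.
exact: fe_trans (fe_sym H) H3.
Qed.

Lemma area_mono w m m' : area_le w m -> m <= m' -> area_le w m'.
Proof.
move=> [l [H1 H2 H3]] Hm; exists l; split => //; exact: leq_trans Hm.
Qed.

Lemma area_sub a b u v m : relator_pm (u ++ inv_word v) ->
  area_le (a ++ v ++ b) m -> area_le (a ++ u ++ b) m.+1.
Proof.
move=> Hr [l [H1 H2 H3]]; exists ((a, u ++ inv_word v) :: l); split.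
- move=> p; rewrite in_cons => /orP [/eqP -> //|]; exact: H1.
- by [].
- rewrite /conj_prod /= -/(conj_prod l).
  apply: (fe_trans (v := a ++ u ++ inv_word v ++ v ++ b)).
    by rewrite catA [X in free_eq _ X]catA; apply: fe_cat_l; apply: fe_sym; apply: inv_cancel.
  apply: (fe_trans (v := a ++ u ++ inv_word v ++ inv_word a ++ a ++ v ++ b)).
    rewrite (catA a) (catA (a ++ u)) [X in free_eq _ X](catA a) [X in free_eq _ X](catA (a ++ u)).
    apply: fe_cat_l; apply: fe_sym; exact: inv_cancel.
  rewrite -!catA.
  do 4 apply: fe_cat_l; exact: H3.
Qed.

Lemma nseqS_rcons (x : letter G) n : nseq n.+1 x = rcons (nseq n x) x.
Proof. by elim: n => //= n ->. Qed.

Variables (x y z : letter G).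
Hypothesis S1 : relator_pm ([:: inv_letter z] ++ inv_word [:: y; x]).
Hypothesis S2 : relator_pm ([:: x; y] ++ inv_word [:: inv_letter z]).
Hypothesis S3 : relator_pm ([:: x; z] ++ inv_word [:: inv_letter y]).

Lemma swap_xy a b m : area_le (a ++ [:: y; x] ++ b) m ->
  area_le (a ++ [:: x; y] ++ b) m.+2.
Proof. by move=> H; apply: area_sub S2 _; apply: area_sub S1 H. Qed.

Lemma move_x k : forall a b m, area_le (a ++ nseq k y ++ x :: b) m ->
  area_le (a ++ x :: nseq k y ++ b) (m + 2 * k).
Proof.
elim: k => [|k IH] a b m H; first by rewrite addn0.
have H' : area_le ((a ++ [:: y]) ++ nseq k y ++ x :: b) m by rewrite -catA.
have := IH _ _ _ H'; rewrite -catA /= => H2.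
have H3 := @swap_xy a (nseq k y ++ b) _ H2.
apply: area_mono H3 _; lia.
Qed.

Lemma main_gen n : area_le (nseq n x ++ nseq n y ++ nseq n z) (n * n + 2 * n).
Proof.
elim: n => [|n IH].
  by exists [::]; split => //; exact: fe_refl.
have A : area_le ((nseq n x ++ nseq n y ++ [:: y]) ++ [:: inv_letter y] ++ nseq n z) (n * n + 2 * n).
  apply: area_free IH; apply: fe_sym.
  have := fe_step (nseq n x ++ nseq n y) (nseq n z) y.
  by rewrite -!catA.
have B := area_sub _ _ _ _ _ S3 A.
have B' : area_le (nseq n x ++ nseq n.+1 y ++ x :: (z :: nseq n z)) (n * n + 2 * n).+1.
  by move: B; rewrite nseqS_rcons -cats1 -!catA.
have C := move_x _ _ _ _ B'.
have -> : nseq n.+1 x ++ nseq n.+1 y ++ nseq n.+1 z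
   = nseq n x ++ x :: nseq n.+1 y ++ z :: nseq n z.
  by rewrite nseqS_rcons -cats1 -catA.
apply: area_mono C _; lia.
Qed.

End Aux.

Theorem lemma4p3 (T : finType) (G : sgraph T) (e f g : Edge G) (n : int) :
  simply_connected G ->
  comb_cycle e f g ->
  area_le (epow e n ++ epow f n ++ epow g n) (3 * `|n|%N ^ 2).
Proof.
move=> _ [h1 h2 h3].
have Cgef : comb_cycle g e f by split.
have Cfge : comb_cycle f g e by split.
case: n => k /=.
- have S1 : relator_pm ([:: inv_letter (g, false)] ++ inv_word [:: (f, false); (e, false)]).
    by left; apply: rel_tri_inv.
  have S2 : relator_pm ([:: (e, false); (f, false)] ++ inv_word [:: inv_letter (g, false)]).
    by left; apply: rel_tri.
  have S3 : relator_pm ([:: (e, false); (g, false)] ++ inv_word [:: inv_letter (f, false)]).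
    by right; apply: rel_tri_inv.
  apply: area_mono (@main_gen _ _ _ _ _ S1 S2 S3 k) _; rewrite expnS expn1; nia.
- have S1 : relator_pm ([:: inv_letter (g, true)] ++ inv_word [:: (f, true); (e, true)]).
    by left; apply: rel_tri.
  have S2 : relator_pm ([:: (e, true); (f, true)] ++ inv_word [:: inv_letter (g, true)]).
    by left; apply: rel_tri_inv.
  have S3 : relator_pm ([:: (e, true); (g, true)] ++ inv_word [:: inv_letter (f, true)]).
    by right; apply: rel_tri.
  apply: area_mono (@main_gen _ _ _ _ _ S1 S2 S3 k.+1) _; rewrite expnS expn1; nia.
Qed.
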